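(* Let $n\ge3$ and let $\mathcal{P}=(V_0,\dots,V_{n-1})$ be an $n$-gon. The following are equivalent: (I) $\mathcal{P}$ is ordinary and locally-strictly convex; (II) $\mathcal{P}$ is quasi-strictly convex; (III) $\mathcal{P}$ is strictly convex.
   Context: A polygon is a finite sequence $\mathcal{P}=(V_0,\dots,V_{n-1})$ of points of $\mathbb{R}^2$, with $V_n:=V_0$, $V_{-1}:=V_{n-1}$, and $i\oplus1:=i+1$ for $i\le n-2$, $(n-1)\oplus1:=0$. $\mathcal{P}$ is convex if $\bigcup_{i=0}^{n-1}\operatorname{conv}\{V_i,V_{i+1}\}=\partial\operatorname{conv}\{V_0,\dots,V_{n-1}\}$. $\mathcal{P}$ is ordinary if $V_i\ne V_j$ for all distinct $i,j\in\{0,\dots,n-1\}$; locally-strict if $V_{i-1},V_i,V_{i+1}$ are non-collinear for every $i\in\{0,\dots,n-1\}$; quasi-strict if for every $i\in\{0,\dots,n-1\}$ and every $j\in\{0,\dots,n-1\}\setminus\{i,i\oplus1\}$ the points $V_i,V_{i\oplus1},V_j$ are non-collinear; strict if $V_i,V_j,V_k$ are non-collinear for any three distinct indices. ''Locally-strictly convex'', ''quasi-strictly convex'', ''strictly convex'' mean the respective property together with convexity. *)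

(* Defs.v *)
From HB Require Import structures.
From mathcomp Require Import all_boot all_order all_algebra.
From mathcomp Require Import all_classical all_reals all_analysis.
Set Implicit Arguments. Unset Strict Implicit. Unset Printing Implicit Defensive.
Import Order.TTheory GRing.Theory Num.Theory.
Import numFieldNormedType.Exports.
Local Open Scope ring_scope.
Local Open Scope classical_set_scope.

Notation pt R := (R * R)%type.

Section Polygons.
Variable R : realType.
Local Notation pt := (pt R).

(* a polygon with n vertices: V : 'I_n -> R^2 ; i (+) 1 is [ordS i],
   i - 1 (cyclically) is [ord_pred i]. *)

Definition segment (A B : pt) : set pt :=
  [set x | exists t : R, 0 <= t <= 1 /\
     x = ((1 - t) * A.1 + t * B.1, (1 - t) * A.2 + t * B.2)].

Definition conv_hull n (V : 'I_n -> pt) : set pt :=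
  [set x | exists l : 'I_n -> R, (forall i, 0 <= l i) /\
     \sum_(i < n) l i = 1 /\
     x = (\sum_(i < n) l i * (V i).1, \sum_(i < n) l i * (V i).2)].

Definition boundary (A : set pt) : set pt := closure A `\` interior A.

Definition is_convex n (V : 'I_n -> pt) : Prop :=
  \bigcup_(i in [set: 'I_n]) segment (V i) (V (ordS i)) = boundary (conv_hull V).

Definition collinear (a b c : pt) : Prop :=
  exists p q r : R, (p != 0 \/ q != 0) /\
    p * a.1 + q * a.2 = r /\ p * b.1 + q * b.2 = r /\ p * c.1 + q * c.2 = r.

Definition ordinary n (V : 'I_n -> pt) : Prop :=
  forall i j : 'I_n, i != j -> V i != V j.

Definition locally_strict n (V : 'I_n -> pt) : Prop :=
  forall i : 'I_n, ~ collinear (V (ord_pred i)) (V i) (V (ordS i)).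

Definition quasi_strict n (V : 'I_n -> pt) : Prop :=
  forall i j : 'I_n, j != i -> j != ordS i ->
    ~ collinear (V i) (V (ordS i)) (V j).

Definition strict n (V : 'I_n -> pt) : Prop :=
  forall i j k : 'I_n, i != j -> j != k -> i != k ->
    ~ collinear (V i) (V j) (V k).

End Polygons.

(* Main.v *)
Require Import Defs.
From HB Require Import structures.
From mathcomp Require Import all_boot all_order all_algebra.
From mathcomp Require Import all_classical all_reals all_analysis.
From mathcomp Require Import zify ring lra.
Import Order.TTheory GRing.Theory Num.Theory.
Import numFieldNormedType.Exports.
Local Open Scope ring_scope.
Local Open Scope classical_set_scope.

Section Helpers.
Variable R : realType.

Lemma aff_near (X : R * R) (f : R * R -> R) (c0 c1 c2 : R) :
  (forall x, f x = c0 + c1 * x.1 + c2 * x.2) -> 0 < f X ->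
  \forall x \near X, 0 < f x.
Proof.
move=> Hf H.
have hc : (fun x : R * R => c0 + c1 * x.1 + c2 * x.2) @ X --> c0 + c1 * X.1 + c2 * X.2.
  apply: cvgD; [apply: cvgD|].
  - exact: cvg_cst.
  - apply: cvgMl_tmp. exact: cvg_fst.
  - apply: cvgMl_tmp. exact: cvg_snd.
rewrite Hf in H.
have h := cvgr_gt _ hc 0 H.
near=> x. rewrite Hf. near: x. exact: h.
Unshelve. all: by end_near.
Qed.

Lemma sum_ind n (g : 'I_n -> R) a : \sum_(k < n) (k == a)%:R * g k = g a.
Proof.
rewrite (bigD1 a) //= eqxx mul1r big1 ?addr0 // => k /negbTE ->.
by rewrite mul0r.
Qed.

Lemma hull3 n (V : 'I_n -> pt R) a b c (x y z : R) :
  0 <= x -> 0 <= y -> 0 <= z -> x + y + z = 1 ->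
  conv_hull V (x * (V a).1 + y * (V b).1 + z * (V c).1,
               x * (V a).2 + y * (V b).2 + z * (V c).2).
Proof.
move=> hx hy hz hs.
exists (fun k => x * (k == a)%:R + y * (k == b)%:R + z * (k == c)%:R).
split; first by move=> k; rewrite !addr_ge0 // mulr_ge0.
have E (g : 'I_n -> R) : \sum_(k < n) (x * (k == a)%:R + y * (k == b)%:R + z * (k == c)%:R) * g k
   = x * g a + y * g b + z * g c.
  under eq_bigr do rewrite !mulrDl -!mulrA.
  by rewrite !big_split /= -!mulr_sumr !sum_ind.
split.
  have := E (fun=> 1); under eq_bigr do rewrite mulr1.
  by move=> ->; rewrite !mulr1.
by rewrite (E (fun k => (V k).1)) (E (fun k => (V k).2)).
Qed.


Lemma tri_interior n (V : 'I_n -> pt R) a b c (xa xb xc : R) :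
  0 < xa -> 0 < xb -> 0 < xc -> xa + xb + xc = 1 ->
  ((V b).1 - (V a).1) * ((V c).2 - (V a).2) - ((V b).2 - (V a).2) * ((V c).1 - (V a).1) != 0 ->
  interior (conv_hull V) (xa * (V a).1 + xb * (V b).1 + xc * (V c).1,
               xa * (V a).2 + xb * (V b).2 + xc * (V c).2).
Proof.
set a1 := (V a).1; set a2 := (V a).2; set b1 := (V b).1; set b2 := (V b).2.
set c1 := (V c).1; set c2 := (V c).2.
set D := (_ - _).
move=> ha hb hc hs hD.
have Exa : xa = 1 - xb - xc by rewrite -hs; ring.
pose lb (x : pt R) := ((x.1 - a1) * (c2 - a2) - (x.2 - a2) * (c1 - a1)) / D.
pose ln (x : pt R) := ((b1 - a1) * (x.2 - a2) - (b2 - a2) * (x.1 - a1)) / D.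
pose la (x : pt R) := 1 - lb x - ln x.
set X := (_, _).
have Ex : forall x : pt R, (la x * a1 + lb x * b1 + ln x * c1,
                            la x * a2 + lb x * b2 + ln x * c2) = x.
  move=> [x1 x2]; rewrite /la /lb /ln /D /=; congr pair; field; exact: hD.
have EX1 : lb X = xb by rewrite /lb /X /D /= Exa; field.
have EX2 : ln X = xc by rewrite /ln /X /D /= Exa; field.
have EX0 : la X = xa by rewrite /la EX1 EX2 Exa.
have Nb : \forall x \near X, 0 < lb x.
  apply: (@aff_near _ _ ((- a1 * (c2 - a2) + a2 * (c1 - a1)) / D) ((c2 - a2) / D) (- (c1 - a1) / D)).
    by move=> x; rewrite /lb; field.
  by rewrite EX1.
have Nn : \forall x \near X, 0 < ln x.
  apply: (@aff_near _ _ (((b1 - a1) * (- a2) + (b2 - a2) * a1) / D) (- (b2 - a2) / D) ((b1 - a1) / D)).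
    by move=> x; rewrite /ln; field.
  by rewrite EX2.
have Na : \forall x \near X, 0 < la x.
  apply: (@aff_near _ _ (1 - (- a1 * (c2 - a2) + a2 * (c1 - a1)) / D - ((b1 - a1) * (- a2) + (b2 - a2) * a1) / D)
     (- ((c2 - a2) / D) - (- (b2 - a2) / D)) (- (- (c1 - a1) / D) - ((b1 - a1) / D))).
    by move=> x; rewrite /la /lb /ln; field.
  by rewrite EX0.
rewrite /interior /=.
near=> x.
rewrite -(Ex x).
apply: hull3; [apply: ltW | apply: ltW | apply: ltW | rewrite /la; ring].
- by near: x.
- by near: x.
- by near: x.
Unshelve. all: by end_near.
Qed.


Definition lf (p q r : R) (P : pt R) := p * P.1 + q * P.2 - r.
Definition tt (p q : R) (P : pt R) := - q * P.1 + p * P.2.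

Lemma Dnz p q r (A B N : pt R) : lf p q r A = 0 -> lf p q r B = 0 -> A != B ->
  lf p q r N != 0 ->
  (B.1 - A.1) * (N.2 - A.2) - (B.2 - A.2) * (N.1 - A.1) != 0.
Proof.
rewrite /lf => hA hB hAB hN; apply/eqP => hD.
set g := p * (N.1 - A.1) + q * (N.2 - A.2).
have hg : g != 0.
  have -> : g = p * N.1 + q * N.2 - r - (p * A.1 + q * A.2 - r) by rewrite /g; ring.
  by rewrite hA subr0.
have hu : p * (B.1 - A.1) + q * (B.2 - A.2) = 0.
  have -> : p * (B.1 - A.1) + q * (B.2 - A.2) = p * B.1 + q * B.2 - r - (p * A.1 + q * A.2 - r) by ring.
  by rewrite hA hB subr0.
have h1 : (B.1 - A.1) * g = 0.
  have -> : (B.1 - A.1) * g = (N.1 - A.1) * (p * (B.1 - A.1) + q * (B.2 - A.2))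
     + q * ((B.1 - A.1) * (N.2 - A.2) - (B.2 - A.2) * (N.1 - A.1)) by rewrite /g; ring.
  by rewrite hu hD !mulr0 addr0.
have h2 : (B.2 - A.2) * g = 0.
  have -> : (B.2 - A.2) * g = (N.2 - A.2) * (p * (B.1 - A.1) + q * (B.2 - A.2))
     - p * ((B.1 - A.1) * (N.2 - A.2) - (B.2 - A.2) * (N.1 - A.1)) by rewrite /g; ring.
  by rewrite hu hD !mulr0 subr0.
move: h1 h2 => /eqP; rewrite mulf_eq0 (negbTE hg) orbF subr_eq0 => /eqP e1.
move/eqP; rewrite mulf_eq0 (negbTE hg) orbF subr_eq0 => /eqP e2.
by move: hAB; case: A B e1 e2 {hA hB hu g hg hD hN} => ? ? [? ?] /= -> ->; rewrite eqxx.
Qed.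

Lemma line_inj p q r (P Q : pt R) : (p != 0 \/ q != 0) ->
  lf p q r P = 0 -> lf p q r Q = 0 -> tt p q P = tt p q Q -> P = Q.
Proof.
rewrite /lf /tt => hpq hP hQ hT.
have hs : p * p + q * q != 0.
  apply: lt0r_neq0.
  case: hpq => h.
    have : 0 < p * p by rewrite -expr2 exprn_even_gt0.
    have : 0 <= q * q by rewrite -expr2 sqr_ge0.
    lra.
  have : 0 < q * q by rewrite -expr2 exprn_even_gt0.
  have : 0 <= p * p by rewrite -expr2 sqr_ge0.
  lra.
have e1 : (p * p + q * q) * (P.1 - Q.1) = 0.
  have -> : (p * p + q * q) * (P.1 - Q.1) = p * ((p * P.1 + q * P.2 - r) - (p * Q.1 + q * Q.2 - r))
     - q * ((- q * P.1 + p * P.2) - (- q * Q.1 + p * Q.2)) by ring.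
  by rewrite hP hQ hT; ring.
have e2 : (p * p + q * q) * (P.2 - Q.2) = 0.
  have -> : (p * p + q * q) * (P.2 - Q.2) = q * ((p * P.1 + q * P.2 - r) - (p * Q.1 + q * Q.2 - r))
     + p * ((- q * P.1 + p * P.2) - (- q * Q.1 + p * Q.2)) by ring.
  by rewrite hP hQ hT; ring.
move: e1 e2 => /eqP; rewrite mulf_eq0 (negbTE hs) /= subr_eq0 => /eqP e1.
move/eqP; rewrite mulf_eq0 (negbTE hs) /= subr_eq0 => /eqP e2.
by case: P Q e1 e2 {hP hQ hT} => ? ? [? ?] /= -> ->.
Qed.

Lemma middle p q r (A B M : pt R) : (p != 0 \/ q != 0) ->
  lf p q r A = 0 -> lf p q r B = 0 -> lf p q r M = 0 ->
  tt p q A < tt p q M -> tt p q M < tt p q B ->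
  exists s, 0 < s < 1 /\ M = ((1 - s) * A.1 + s * B.1, (1 - s) * A.2 + s * B.2).
Proof.
move=> hpq hA hB hM h1 h2.
have hd : tt p q B - tt p q A != 0 by apply: lt0r_neq0; rewrite subr_gt0; apply: lt_trans h2.
exists ((tt p q M - tt p q A) / (tt p q B - tt p q A)); split.
  apply/andP; split.
    by apply: divr_gt0; rewrite subr_gt0 //; apply: lt_trans h2.
  rewrite ltr_pdivrMr ?mul1r; last by rewrite subr_gt0; apply: lt_trans h2.
  by rewrite ltrD2r.
apply: (@line_inj p q r) => //.
  move: hA hB; rewrite /lf /= => hA hB.
  set s := (_ / _).
  have -> : p * ((1 - s) * A.1 + s * B.1) + q * ((1 - s) * A.2 + s * B.2) - r
     = (1 - s) * (p * A.1 + q * A.2 - r) + s * (p * B.1 + q * B.2 - r) by ring.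
  by rewrite hA hB !mulr0 addr0.
move: hd; rewrite /tt /= => hd; field; exact: hd.
Qed.


Lemma key n (V : 'I_n -> pt R) a b m c (p q r s : R) : is_convex V ->
  0 < s < 1 -> V m = ((1 - s) * (V a).1 + s * (V b).1, (1 - s) * (V a).2 + s * (V b).2) ->
  lf p q r (V a) = 0 -> lf p q r (V b) = 0 -> V a != V b -> lf p q r (V c) != 0 ->
  (c = ordS m \/ m = ordS c) -> False.
Proof.
move=> conv /andP[s0 s1] hVm hA hB hab hc hmc.
have hD := @Dnz p q r _ _ _ hA hB hab hc.
have hI := @tri_interior n V a b c ((1 - s) / 2) (s / 2) (1 / 2).
pose X : pt R := (((1 - s) / 2) * (V a).1 + (s / 2) * (V b).1 + (1 / 2) * (V c).1,
               ((1 - s) / 2) * (V a).2 + (s / 2) * (V b).2 + (1 / 2) * (V c).2).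
have {}hI : interior (conv_hull V) X.
  apply: hI => //; [lra|lra|by field].
have hbd : boundary (conv_hull V) X.
  rewrite -conv.
  case: hmc => e.
    exists m => //.
    exists (1 / 2); split.
      by apply/andP; split; lra.
    by rewrite /X e hVm /=; congr pair; by field.
  exists c => //.
  rewrite -e.
  exists (1 / 2); split.
    by apply/andP; split; lra.
  by rewrite /X hVm /=; congr pair; by field.
by case: hbd => _ H; apply: H.
Qed.


Lemma mid2 n (V : 'I_n -> pt R) (p q r : R) a m b : is_convex V -> locally_strict V ->
  (p != 0 \/ q != 0) ->
  lf p q r (V a) = 0 -> lf p q r (V m) = 0 -> lf p q r (V b) = 0 ->
  (tt p q (V a) < tt p q (V m) /\ tt p q (V m) < tt p q (V b)) \/
  (tt p q (V b) < tt p q (V m) /\ tt p q (V m) < tt p q (V a)) -> False.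
Proof.
move=> conv ls hpq.
suff H : forall a b, lf p q r (V a) = 0 -> lf p q r (V m) = 0 -> lf p q r (V b) = 0 ->
  tt p q (V a) < tt p q (V m) -> tt p q (V m) < tt p q (V b) -> False.
  move=> ha hm hb [[h1 h2]|[h1 h2]]; [exact: (H a b)| exact: (H b a)].
move=> {}a {}b hA hM hB h1 h2.
have [s [hs hVm]] := @middle p q r _ _ _ hpq hA hB hM h1 h2.
have hab : V a != V b.
  by apply/eqP => e; move: (lt_trans h1 h2); rewrite e ltxx.
case: (boolP (lf p q r (V (ordS m)) == 0)) => h3; last first.
  exact: (@key n V a b m (ordS m) p q r s conv hs hVm hA hB hab h3 (or_introl erefl)).
case: (boolP (lf p q r (V (ord_pred m)) == 0)) => h4; last first.
  exact: (@key n V a b m (ord_pred m) p q r s conv hs hVm hA hB hab h4 (or_intror (esym (ord_predK m)))).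
apply: (ls m); exists p, q, r; split => //.
move: h3 h4 hM; rewrite /lf !subr_eq0 => /eqP h3 /eqP h4 /eqP; rewrite subr_eq0 => /eqP hM.
by [].
Qed.

Lemma col_perm1 (a b c : pt R) : collinear a b c -> collinear a c b.
Proof. by move=> [p [q [r [h [h1 [h2 h3]]]]]]; exists p, q, r. Qed.

Lemma col_eq12 (P Q : pt R) : collinear P P Q.
Proof.
have [h|[h1 h2]] : (Q.2 - P.2 != 0 \/ P.1 - Q.1 != 0) \/ (Q.2 - P.2 = 0 /\ P.1 - Q.1 = 0).
  case: (eqVneq (Q.2 - P.2) 0) => h1; case: (eqVneq (P.1 - Q.1) 0) => h2; by auto.
  exists (Q.2 - P.2), (P.1 - Q.1), ((Q.2 - P.2) * P.1 + (P.1 - Q.1) * P.2).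
  by split => //; split => //; split => //; ring.
exists 1, 0, P.1; split; first by left; exact: oner_neq0.
move/eqP: h2; rewrite subr_eq0 => /eqP h2.
by rewrite h2 !mul1r !mul0r !addr0.
Qed.

End Helpers.

Lemma ordS_neq n (i : 'I_n) : (2 <= n)%N -> ordS i != i.
Proof. move=> hn; rewrite -val_eqE /=. case: i => i hi /=. apply/eqP.
have [h|h] := ltnP i.+1 n. rewrite modn_small //. lia.
have -> : i.+1 = n by lia. rewrite modnn. lia. Qed.

Lemma ordSS_neq n (i : 'I_n) : (3 <= n)%N -> ordS (ordS i) != i.
Proof. move=> hn; rewrite -val_eqE /=. case: i => i hi /=. apply/eqP.
have [h|h] := ltnP i.+1 n.
 rewrite (modn_small h). have [h2|h2] := ltnP i.+2 n. rewrite modn_small //. lia.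
 have -> : i.+2 = n by lia. rewrite modnn. lia.
have -> : i.+1 = n by lia. rewrite modnn modn_small; lia. Qed.

Theorem proposition1p14 (R : realType) (n : nat) (V : 'I_n -> pt R) :
  (3 <= n)%N ->
  ((ordinary V /\ locally_strict V /\ is_convex V) <->
     (quasi_strict V /\ is_convex V)) /\
  ((quasi_strict V /\ is_convex V) <-> (strict V /\ is_convex V)).
Proof.
move=> hn.
have hn2 : (2 <= n)%N by apply: ltnW.
have I_strict : ordinary V -> locally_strict V -> is_convex V -> strict V.
  move=> ho hl hc i j k hij hjk hik [p [q [r [hpq [e1 [e2 e3]]]]]].
  have hi : lf R p q r (V i) = 0 by rewrite /lf e1 subrr.
  have hj : lf R p q r (V j) = 0 by rewrite /lf e2 subrr.
  have hk : lf R p q r (V k) = 0 by rewrite /lf e3 subrr.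
  have T : forall a b, a != b -> lf R p q r (V a) = 0 -> lf R p q r (V b) = 0 ->
      tt R p q (V a) != tt R p q (V b).
    move=> a b hab ha hb; apply/eqP => e.
    by move: (ho _ _ hab); rewrite (@line_inj _ p q r _ _ hpq ha hb e) eqxx.
  have M := fun a m b => @mid2 R n V p q r a m b hc hl hpq.
  move: (T _ _ hij hi hj) (T _ _ hjk hj hk) (T _ _ hik hi hk).
  rewrite !neq_lt => /orP[]h1 /orP[]h2 /orP[]h3;
  first [ by apply: (M i j k) => //; lra
        | by apply: (M j i k) => //; lra
        | by apply: (M i k j) => //; lra
        | lra ].
have strict_quasi : strict V -> quasi_strict V.
  move=> hs i j hji hjs; apply: hs; [by rewrite eq_sym ordS_neq | by rewrite eq_sym | by rewrite eq_sym].
have quasi_I : quasi_strict V -> ordinary V /\ locally_strict V.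
  move=> hq; split.
    move=> i0 j0 hij; apply/negP => /eqP e.
    case: (eqVneq j0 (ordS i0)) => hj.
      have hk1 : ordS (ordS i0) != i0 by apply: ordSS_neq.
      have hk2 : ordS (ordS i0) != ordS i0 by apply: ordS_neq.
      apply: (hq i0 (ordS (ordS i0)) hk1 hk2).
      by rewrite -hj -e; apply: col_eq12.
    apply: (hq i0 j0 _ hj); first by rewrite eq_sym.
    rewrite -e; apply: col_perm1; apply: col_eq12.
  move=> i1.
  have := hq (ord_pred i1) (ordS i1).
  rewrite ord_predK; apply.
    rewrite -{1}(ord_predK i1); apply: ordSS_neq => //.
  exact: ordS_neq.
split; split.
- move=> [ho [hl hc]]; split => //; apply: strict_quasi; exact: I_strict.
- move=> [hq hc]; have [ho hl] := quasi_I hq; by [].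
- move=> [hq hc]; have [ho hl] := quasi_I hq; split => //; exact: I_strict.
- move=> [hs hc]; split => //; exact: strict_quasi.
Qed.
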